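(* Let $\{G_j\}_{j\in J}$ be a family of metrizable topological groups. Let $\mathbb I=[J]^{\leq\omega}$ be the set of countable subsets of $J$ ordered by inclusion, and for $D\in\mathbb I$ let $G_D=\prod_{j\in D}G_j\times\prod_{j\notin D}\{e_j\}\subseteq\prod_{j\in J}G_j$ with the product topology. Then $\{G_D\}_{D\in\mathbb I}$ (with inclusions as bonding maps) satisfies ACP, and $\operatorname{colim}_{D\in\mathbb I}G_D=\sum_{j\in J}(G_j,e_j)$.
   Context: For pointed spaces $(Y_j,0_j)$, the $\Sigma$-product $\sum_{j\in J}(Y_j,0_j)$ is the set of $y\in\prod_jY_j$ whose support $\{j\mid y_j\neq0_j\}$ is countable, with the topology induced by the product topology. $\operatorname{colim}$ denotes the union $\bigcup_DG_D$ with the colimit space topology $\{U\mid U\cap G_D\text{ open in }G_D\ \forall D\}$. ACP means that this colimit space topology coincides with the finest group topology on the union making all inclusions continuous (equivalently, the union with the colimit space topology is a topological group). *)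

(* Defs.v *)
From HB Require Import structures.
From mathcomp Require Import all_boot all_order all_algebra.
From mathcomp Require Import all_classical all_reals all_analysis.
From Stdlib Require Import Rdefinitions.

Set Implicit Arguments.
Unset Strict Implicit.
Unset Printing Implicit Defensive.

Local Open Scope classical_set_scope.

Definition is_topological_group (T : topologicalType)
  (mul : T -> T -> T) (inv : T -> T) (e : T) : Prop :=
  [/\ (forall x y z, mul x (mul y z) = mul (mul x y) z),
      (forall x, mul e x = x /\ mul x e = x),
      (forall x, mul (inv x) x = e /\ mul x (inv x) = e),
      continuous (fun p : T * T => mul p.1 p.2) &
      continuous inv].

Definition metrizable (T : topologicalType) : Prop :=
  exists d : T -> T -> R,
    [/\ (forall x y, (0 <= d x y)%R),
        (forall x y, d x y = 0%R <-> x = y),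
        (forall x y, d x y = d y x),
        (forall x y z, (d x z <= d x y + d y z)%R) &
        (forall A : set T, open A <->
           (forall x, A x -> exists r : R, (0 < r)%R /\
               [set y | (d x y < r)%R] `<=` A))].

Section SigmaProduct.
Variables (J : Type) (G : J -> topologicalType).

Definition Prod := prod_topology G.

Definition rel_open (S A : set Prod) : Prop :=
  exists V : set Prod, open V /\ A = V `&` S.

Definition support (e : forall j, G j) (y : Prod) : set J :=
  [set j | y j <> e j].

Definition sigma_prod (e : forall j, G j) : set Prod :=
  [set y | countable (support e y)].

Definition GD (e : forall j, G j) (D : set J) : set Prod :=
  [set y | forall j, ~ D j -> y j = e j].

Definition colim_carrier (e : forall j, G j) : set Prod :=
  [set y | exists D : set J, countable D /\ GD e D y].

Definition colim_open (e : forall j, G j) (U : set Prod) : Prop :=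
  U `<=` colim_carrier e /\
  forall D : set J, countable D -> rel_open (GD e D) (U `&` GD e D).

Definition pmul (mul : forall j, G j -> G j -> G j) (x y : Prod) : Prod :=
  fun j => mul j (x j) (y j).
Definition pinv (inv : forall j, G j -> G j) (x : Prod) : Prod :=
  fun j => inv j (x j).

(** ACP: the union with the colimit space topology is a topological group
    (the union is a subgroup, multiplication is continuous from
    colim x colim (product topology, written out via basic open boxes) to colim,
    and inversion is continuous). *)
Definition ACP (mul : forall j, G j -> G j -> G j) (inv : forall j, G j -> G j)
  (e : forall j, G j) : Prop :=
  let C := colim_carrier e in
  [/\ C (fun j => e j),
      (forall x y, C x -> C y -> C (pmul mul x y)),
      (forall x, C x -> C (pinv inv x)),
      (forall W x y, colim_open e W -> C x -> C y -> W (pmul mul x y) ->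
         exists U V, [/\ colim_open e U, colim_open e V, U x, V y &
           forall u v, U u -> V v -> W (pmul mul u v)]) &
      (forall W x, colim_open e W -> C x -> W (pinv inv x) ->
         exists U, [/\ colim_open e U, U x &
           forall u, U u -> W (pinv inv u)])].

End SigmaProduct.

(* Main.v *)
Require Import Defs.
From HB Require Import structures.
From mathcomp Require Import all_boot all_order all_algebra.
From mathcomp Require Import all_classical all_reals all_analysis.
From Stdlib Require Import Reals Lra List Lia.
From mathcomp Require Import zify.

Local Open Scope classical_set_scope.


Lemma prod_cvgP (J : Type) (G : J -> topologicalType)
  (X : Type) (F : set_system X) (FF : Filter F) (f : X -> Prod G) (x : Prod G) :
  (forall i, (fun t => f t i) @ F --> x i) -> f @ F --> x.
Proof.
move=> H.
have := @cvg_sup _ J (fun i => Topological.class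
    (initial_topology (fun f : (forall i, G i) => f i))) (f @ F) x _.
move=> [_ ]; apply => i A /=.
rewrite (@nbhsE (initial_topology (fun f : (forall i, G i) => f i))) => -[B [[C oC <-] Bx] BA].
have := H i C; rewrite /= => /(_ _) h.
apply: filterS BA _; apply: h; exact: open_nbhs_nbhs.
Qed.

Lemma proj_cont (J : Type) (G : J -> topologicalType) (i : J) :
  continuous (fun f : Prod G => f i).
Proof.
move=> f.
have := @cvg_sup _ J (fun i => Topological.class
    (initial_topology (fun f : (forall i, G i) => f i))) (nbhs (f : Prod G)) f _.
move=> [+ _] => /(_ cvg_id i) h.
apply: cvg_trans _ (@initial_continuous _ _ (fun f : (forall i, G i) => f i) f).
move=> A hA; apply: h; exact hA.
Qed.

Lemma countableU' (T : Type) (A B : set T) :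
  countable A -> countable B -> countable (A `|` B).
Proof.
move=> cA cB.
have : countable (\bigcup_(b in [set: bool]) (if b then A else B)).
  by apply: bigcup_countable => // -[].
apply: sub_countable; apply: subset_card_le => x [Ax|Bx].
  by exists true.
by exists false.
Qed.

Lemma mball_open (T : topologicalType) (d : T -> T -> R)
  (htri : forall x y z, (d x z <= d x y + d y z)%R)
  (hop : forall A : set T, open A <->
           (forall x, A x -> exists r : R, (0 < r)%R /\
               [set y | (d x y < r)%R] `<=` A)) a r :
  open [set y | (d a y < r)%R].
Proof.
apply/hop => y /= hy; exists (r - d a y)%R; split; first lra.
move=> z /= hz; have := htri a y z; lra.
Qed.

Lemma mnbhs_ball (T : topologicalType) (d : T -> T -> R)
  (hop : forall A : set T, open A <->
           (forall x, A x -> exists r : R, (0 < r)%R /\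
               [set y | (d x y < r)%R] `<=` A)) a (N : set T) :
  nbhs a N -> exists r : R, (0 < r)%R /\ [set y | (d a y < r)%R] `<=` N.
Proof.
rewrite nbhsE => -[B [oB Ba] BN].
have [r [r0 hr]] := (proj1 (hop B) oB) a Ba.
by exists r; split => //; apply: subset_trans BN.
Qed.

Lemma colim_sigma (J : Type) (G : J -> topologicalType) (e : forall j, G j) :
  colim_carrier e = sigma_prod e.
Proof.
apply/seteqP; split => y.
  move=> [D [cD hD]]; rewrite /sigma_prod /=.
  apply: sub_countable cD; apply: subset_card_le => j /= hj.
  by apply: contrapT => nj; apply: hj; apply: hD.
move=> hy; exists (Defs.support e y); split => // j nj.
by apply: contrapT => hne; apply: nj.
Qed.

Lemma GD_sigma (J : Type) (G : J -> topologicalType) (e : forall j, G j) D :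
  countable D -> GD e D `<=` sigma_prod e.
Proof. by move=> cD y hy; rewrite -colim_sigma; exists D. Qed.



Definition Lof {J P : Type} (E : P -> nat -> option J) (h : list P) (k : nat) : list J :=
  flat_map (fun z => flat_map (fun m => match E z m with Some j => j :: nil | None => nil end)
    (seq 0 k)) h.

Fixpoint hist {J P : Type} (x : P) (Y : list J -> nat -> P) (E : P -> nat -> option J)
  (k : nat) : list P :=
  match k with
  | 0 => x :: nil
  | S k => hist x Y E k ++ (Y (Lof E (hist x Y E k) k) k :: nil)
  end.

Definition yk {J P : Type} (x : P) (Y : list J -> nat -> P) (E : P -> nat -> option J)
  (k : nat) : P := Y (Lof E (hist x Y E k) k) k.

Lemma hist_x {J P : Type} x Y E k : List.In x (@hist J P x Y E k).
Proof. elim: k => [|k IH] /=; [by left | by apply: in_or_app; left]. Qed.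

Lemma hist_in {J P : Type} x Y E i k : (i < k)%N -> List.In (@yk J P x Y E i) (hist x Y E k).
Proof.
elim: k => [//|k IH] hik /=; apply: in_or_app.
rewrite ltnS leq_eqVlt in hik; case/orP: hik => [/eqP ->|/IH]; last by left.
by right; left.
Qed.

Lemma Lof_in {J P : Type} (E : P -> nat -> option J) h k z m j :
  List.In z h -> (m < k)%N -> E z m = Some j -> List.In j (Lof E h k).
Proof.
move=> zh mk Ezm; apply/in_flat_map; exists z; split => //.
apply/in_flat_map; exists m; split; last by rewrite Ezm; left.
apply/in_seq; split; first by apply/leP.
by apply/ltP.
Qed.

Lemma enum_exists (J : Type) : exists E : set J -> nat -> option J,
  forall A, countable A -> forall j, A j -> exists m, E A m = Some j.
Proof.
have /choice [E HE] : forall A : set J, exists f : nat -> option J,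
    countable A -> forall j, A j -> exists m, f m = Some j.
  move=> A; have [cA|ncA] := boolP (countable A); last first.
    by exists (fun _ => None).
  have /countable_injP [g ginj] := cA.
  exists (fun m => if pselect (exists j, A j /\ g j = m) is left P
            then Some (projT1 (cid P)) else None).
  move=> _ j Aj; exists (g j).
  case: pselect => [P|]; last by move=> []; exists j.
  case: (cid P) => j' [Aj' gj'] /=; congr Some.
  by apply: ginj => //; rewrite inE.
by exists E.
Qed.



Definition box (J : Type) (G : J -> topologicalType) (d : forall j, G j -> G j -> R)
  (x : Prod G) (F : list J) (n : nat) : set (Prod G) :=
  [set z | forall j, List.In j F -> (d j (x j) (z j) < / INR n.+1)%R].

Arguments box {J G}.

Lemma box_open (J : Type) (G : J -> topologicalType) (d : forall j, G j -> G j -> R)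
  (htri : forall j x y z, (d j x z <= d j x y + d j y z)%R)
  (hop : forall j (A : set (G j)), open A <->
           (forall x, A x -> exists r : R, (0 < r)%R /\
               [set y | (d j x y < r)%R] `<=` A)) x F n :
  open (box d x F n).
Proof.
elim: F => [|a F IH].
  have -> : box d x nil n = setT by apply/seteqP; split=> // z _ j [].
  exact: openT.
have -> : box d x (a :: F) n =
    (fun z : Prod G => z a) @^-1` [set y | (d a (x a) y < / INR n.+1)%R] `&` box d x F n.
  apply/seteqP; split => z /=.
    by move=> h; split; [apply: h; left | move=> j jF; apply: h; right].
  by move=> [h1 h2] j [<-|jF] //; apply: h2.
apply: openI => //; move: (@proj_cont _ G a) => /continuousP; apply.
have := (@mball_open _ _ (htri a) (hop a) (x a) (/ INR n.+1)%R). exact.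
Qed.

Lemma key_open (J : Type) (G : J -> topologicalType) (e : forall j, G j)
  (d : forall j, G j -> G j -> R)
  (hd0 : forall j x, d j x x = 0%R)
  (htri : forall j x y z, (d j x z <= d j x y + d j y z)%R)
  (hop : forall j (A : set (G j)), open A <->
           (forall x, A x -> exists r : R, (0 < r)%R /\
               [set y | (d j x y < r)%R] `<=` A)) (U : set (Prod G)) x :
  colim_open e U -> U x ->
  exists O : set (Prod G), [/\ open O, O x & O `&` sigma_prod e `<=` U].
Proof.
move=> [UC HU] Ux.
have sx : sigma_prod e x by rewrite -colim_sigma; exact: UC.
apply: contrapT => hno.
have hY : forall p : list J * nat, exists y : Prod G,
    [/\ sigma_prod e y, ~ U y & box d x p.1 p.2 y].
  move=> [F n]; apply: contrapT => hn; apply: hno.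
  exists (box d x F n); split.
  - exact: box_open.
  - move=> j _; rewrite hd0; apply: Rinv_0_lt_compat; apply: lt_0_INR; lia.
  - move=> z [bz sz]; apply: contrapT => nUz; apply: hn; by exists z; split.
have [Y0 HY0] := choice hY.
pose Y := fun F n => Y0 (F, n).
have [E0 HE0] := enum_exists J.
pose E := fun z : Prod G => E0 (Defs.support e z).
pose y := yk x Y E.
have Hy k : [/\ sigma_prod e (y k), ~ U (y k) &
    box d x (Lof E (hist x Y E k) k) k (y k)] := HY0 _.
have cvgy : y @ \oo --> x.
  apply: (@prod_cvgP _ _ _ _ _ y x) => j.
  have [[i hi]|nex] := pselect (exists i, y i j <> x j); last first.
    have -> : (fun t => y t j) = fun _ => x j.
      by apply: funext => t; apply: contrapT => h; apply: nex; exists t.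
    exact: cvg_cst.
  have [z [zin cz zj]] : exists z, [/\ (forall k, (i < k)%N -> List.In z (hist x Y E k)),
      countable (Defs.support e z) & Defs.support e z j].
    have [xj|xj] := pselect (x j = e j).
      exists (y i); split.
      - by move=> k hik; exact: hist_in.
      - by case: (Hy i).
      - by rewrite /Defs.support /= -xj.
    exists x; split => //; move=> k _; exact: hist_x.
  have [m Em] := HE0 _ cz _ zj.
  move=> A /= /(@mnbhs_ball _ _ (hop j)) [r [r0 hr]].
  have [N [hN N0]] := archimed_cor1 r r0.
  exists (N + i + m).+1 => // k /= hk.
  apply: hr => /=.
  have jL : List.In j (Lof E (hist x Y E k) k).
    apply: (@Lof_in _ _ E _ k z m j) => //.
      by apply: zin; lia.
    lia.
  case: (Hy k) => _ _ /(_ j jL) hb.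
  have : (/ INR k.+1 <= / INR N)%R.
    apply: Rinv_le_contravar; first by apply: lt_0_INR.
    apply: le_INR; apply/leP; lia.
  lra.
pose D := Defs.support e x `|` \bigcup_(i in [set: nat]) Defs.support e (y i).
have cD : countable D.
  apply: countableU' => //; apply: bigcup_countable => // i _; by case: (Hy i).
have [V [oV hV]] := HU D cD.
have GDx : GD e D x by move=> j nj; apply: contrapT => h; apply: nj; left.
have GDy k : GD e D (y k).
  by move=> j nj; apply: contrapT => h; apply: nj; right; exists k.
have Vx : V x.
  have h : (U `&` GD e D) x by split.
  by move: h; rewrite hV => -[].
have := cvgy V (open_nbhs_nbhs (conj oV Vx)) => -[N _ hN].
have VN : V (y N) := hN N (leqnn N).
have : (V `&` GD e D) (y N) by split.
rewrite -hV => -[UN _].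
by case: (Hy N).
Qed.


Lemma part3 (J : Type) (G : J -> topologicalType) (e : forall j, G j)
  (d : forall j, G j -> G j -> R)
  (hd0 : forall j x, d j x x = 0%R)
  (htri : forall j x y z, (d j x z <= d j x y + d j y z)%R)
  (hop : forall j (A : set (G j)), open A <->
           (forall x, A x -> exists r : R, (0 < r)%R /\
               [set y | (d j x y < r)%R] `<=` A)) (U : set (Prod G)) :
  colim_open e U <-> rel_open (sigma_prod e) U.
Proof.
split.
  move=> hU.
  exists (\bigcup_(O in [set O : set (Prod G) | open O /\ O `&` sigma_prod e `<=` U]) O).
  split.
    by apply: bigcup_open => O [].
  apply/seteqP; split => x.
    move=> Ux; have [Q [oO Ox sO]] := @key_open _ _ e d hd0 htri hop U x hU Ux.
    split; first by exists Q.
    by rewrite -colim_sigma; exact: hU.1.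
  by move=> [[Q [oO sO] Ox] sx]; apply: sO.
move=> [V [oV ->]]; split.
  by rewrite colim_sigma => ? [].
move=> D cD; exists V; split => //.
apply/seteqP; split => z; first by move=> [[]].
by move=> [Vz Dz]; split => //; split => //; apply: GD_sigma Dz.
Qed.

Lemma pmul_cont (J : Type) (G : J -> topologicalType) (mul : forall j, G j -> G j -> G j)
  (hc : forall j, continuous (fun p : G j * G j => mul j p.1 p.2)) (x y : Prod G) :
  (fun p : Prod G * Prod G => Defs.pmul mul p.1 p.2) @ nbhs (x, y) --> Defs.pmul mul x y.
Proof.
apply: (@prod_cvgP _ _ _ _ _ (fun p : Prod G * Prod G => Defs.pmul mul p.1 p.2)) => i.
have h1 : (fun p : Prod G * Prod G => (p.1 i, p.2 i)) @ nbhs (x,y) --> (x i, y i).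
  apply: cvg_pair.
    apply: (@continuous_comp _ _ _ fst (fun f : Prod G => f i) (x,y)).
      exact: cvg_fst.
    exact: proj_cont.
  apply: (@continuous_comp _ _ _ snd (fun f : Prod G => f i) (x,y)).
    exact: cvg_snd.
  exact: proj_cont.
exact: (@continuous_comp _ _ _ (fun p : Prod G * Prod G => (p.1 i, p.2 i))
   (fun q => mul i q.1 q.2) (x,y) h1 (hc i _)).
Qed.

Lemma pinv_cont (J : Type) (G : J -> topologicalType) (inv : forall j, G j -> G j)
  (hc : forall j, continuous (inv j)) (x : Prod G) :
  (Defs.pinv inv) @ nbhs x --> Defs.pinv inv x.
Proof.
apply: (@prod_cvgP _ _ _ _ _ (Defs.pinv inv)) => i.
exact: (@continuous_comp _ _ _ (fun f : Prod G => f i) (inv i) x (@proj_cont _ G i x) (hc i _)).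
Qed.


Theorem corollary2p5 (J : Type) (G : J -> topologicalType)
  (mul : forall j, G j -> G j -> G j) (inv : forall j, G j -> G j)
  (e : forall j, G j)
  (Htg : forall j, is_topological_group (mul j) (inv j) (e j))
  (Hmet : forall j, metrizable (G j)) :
  ACP mul inv e /\
  colim_carrier e = sigma_prod e /\
  (forall U : set (Prod G), colim_open e U <-> rel_open (sigma_prod e) U).
Proof.
pose d := fun j => proj1_sig (cid (Hmet j)).
have hd : forall j, _ := fun j => proj2_sig (cid (Hmet j)).
have hd0 : forall j x, d j x x = 0%R.
  by move=> j x; case: (hd j) => _ h _ _ _; apply/h.
have htri : forall j x y z, (d j x z <= d j x y + d j y z)%R.
  by move=> j; case: (hd j).
have hop : forall j (A : set (G j)), open A <->
           (forall x, A x -> exists r : R, (0 < r)%R /\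
               [set y | (d j x y < r)%R] `<=` A).
  by move=> j; case: (hd j).
have P3 := @part3 _ _ e d hd0 htri hop.
have mee : forall j, mul j (e j) (e j) = e j.
  by move=> j; case: (Htg j) => _ h _ _ _; case: (h (e j)).
have iee : forall j, inv j (e j) = e j.
  move=> j; case: (Htg j) => _ h1 h2 _ _.
  by rewrite -{1}(proj2 (h1 (inv j (e j)))); case: (h2 (e j)).
have Cmul : forall x y, colim_carrier e x -> colim_carrier e y ->
    colim_carrier e (Defs.pmul mul x y).
  move=> x y [D1 [c1 h1]] [D2 [c2 h2]]; exists (D1 `|` D2); split.
    exact: countableU'.
  move=> j nj.
  have n1 : ~ D1 j by move=> h; apply: nj; left.
  have n2 : ~ D2 j by move=> h; apply: nj; right.
  by rewrite /Defs.pmul h1 // h2 // mee.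
have Cinv : forall x, colim_carrier e x -> colim_carrier e (Defs.pinv inv x).
  move=> x [D [c h]]; exists D; split => // j nj.
  by rewrite /Defs.pinv h.
split; last split.
- split.
  + by exists set0; split.
  + exact: Cmul.
  + exact: Cinv.
  + move=> W x y hW Cx Cy Wxy.
    have [V [oV WE]] := (P3 W).1 hW; subst W.
    have hc : forall j, continuous (fun p : G j * G j => mul j p.1 p.2).
      by move=> j; case: (Htg j).
    have := @pmul_cont _ _ mul hc x y _ (open_nbhs_nbhs (conj oV Wxy.1)).
    move=> -[[A1 A2] /= [nA1 nA2] sub].
    move: nA1; rewrite nbhsE => -[B1 [oB1 B1x] B1A1].
    move: nA2; rewrite nbhsE => -[B2 [oB2 B2y] B2A2].
    exists (B1 `&` sigma_prod e), (B2 `&` sigma_prod e); split.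
    * by apply/P3; exists B1.
    * by apply/P3; exists B2.
    * by split => //; rewrite -colim_sigma.
    * by split => //; rewrite -colim_sigma.
    * move=> u v [B1u su] [B2v sv]; split.
        by apply: (sub (u, v)); split; [apply: B1A1|apply: B2A2].
      by rewrite -colim_sigma; apply: Cmul; rewrite colim_sigma.
  + move=> W x hW Cx Wx.
    have [V [oV WE]] := (P3 W).1 hW; subst W.
    have hc : forall j, continuous (inv j) by move=> j; case: (Htg j).
    have := @pinv_cont _ _ inv hc x _ (open_nbhs_nbhs (conj oV Wx.1)).
    rewrite nbhsE => -[B [oB Bx] BA].
    exists (B `&` sigma_prod e); split.
    * by apply/P3; exists B.
    * by split => //; rewrite -colim_sigma.
    * move=> u [Bu su]; split; first by apply: BA.
      by rewrite -colim_sigma; apply: Cinv; rewrite colim_sigma.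
- exact: colim_sigma.
- exact: P3.
Qed.
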